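(* Let $\mathbb{C}^{\mathbb{N}}$ be the Fréchet algebra of all complex sequences with pointwise multiplication and the product topology, and let $\mathcal{U}$ be a countably incomplete $\aleph(\mathbb{C}^{\mathbb{N}})^+$-good ultrafilter on an index set $I$. Then $(\mathbb{C}^{\mathbb{N}})_{\mathcal{U}}$ is isomorphic (as a Fréchet algebra) to $\mathbb{C}^{\mathbb{N}}$, has the approximation property, and is contractible.
   Context: For a Fréchet algebra $(\mathcal{A},(P_n))$ the ultrapower $(\mathcal{A})_{\mathcal{U}}=\ell_\infty(I,\mathcal{A})/\mathcal{N}_{\mathcal{U}}$ ($\ell_\infty$: families with $\sup_iP_n(x_i)<\infty$ for all $n$; $\mathcal{N}_{\mathcal{U}}$: those with $\lim_{\mathcal{U}}P_n(x_i)=0$ for all $n$), with seminorms $\lim_{\mathcal{U}}P_n(x_i)$ and coordinatewise product. A Fréchet algebra is contractible if it has a diagonal: $T\in\mathcal{A}\hat\otimes\mathcal{A}$ (completed projective tensor product) with $\Delta_{\mathcal{A}}(T)a=a$ and $a\cdot T=T\cdot a$ for all $a$, where $\Delta_{\mathcal{A}}(a\otimes b)=ab$, $a\cdot(b\otimes c)=ab\otimes c$, $(b\otimes c)\cdot a=b\otimes ca$. $\aleph(E)=\max(\aleph_U(E),\aleph_B(E))$ (least cardinalities of a zero-neighbourhood base and of a fundamental family of bounded sets); in this paper $\aleph^+=2^\aleph$. $\mathcal{U}$ is $\aleph$-good if for each cardinal $\beta\le\aleph$ and every monotonic $f:P_f(\beta)\to\mathcal{U}$ there is an additive $g:P_f(\beta)\to\mathcal{U}$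 with $g(u)\subseteq f(u)$ for all $u$ (monotonic: $u\subseteq w\Rightarrow f(u)\supseteq f(w)$; additive: $g(u\cup w)=g(u)\cap g(w)$). Approximation property: continuous finite rank operators are dense in the continuous operators for uniform convergence on precompact sets. *)

(* Defs.v *)
From mathcomp Require Import all_boot all_order all_algebra.
From mathcomp Require Import all_classical all_reals.
From mathcomp.real_closed Require Import complex.

Set Implicit Arguments.
Unset Strict Implicit.
Unset Printing Implicit Defensive.

Import Order.TTheory GRing.Theory Num.Theory.
Local Open Scope classical_set_scope.
Local Open Scope ring_scope.

(* Only the operations are recorded; the statement below asserts the  *)
(* properties needed.                                                  *)
Record falg_ops (R : realType) := FAlgOps {
  fcar : Type;
  fzero : fcar;
  fadd : fcar -> fcar -> fcar;
  fopp : fcar -> fcar;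
  fmul : fcar -> fcar -> fcar;
  fscale : R[i] -> fcar -> fcar;
  fsn : nat -> fcar -> R }.
Arguments fzero {R} f.
Arguments fadd {R f}.
Arguments fopp {R f}.
Arguments fmul {R f}.
Arguments fscale {R f}.
Arguments fsn {R} f.
Arguments fcar {R} f.

Section General.
Variable R : realType.
Implicit Types E F : falg_ops R.

Definition fsub E (x y : fcar E) := fadd x (fopp y).

Definition cont_linear E F (T : fcar E -> fcar F) : Prop :=
  (forall x y, T (fadd x y) = fadd (T x) (T y)) /\
  (forall (c : R[i]) x, T (fscale c x) = fscale c (T x)) /\
  (forall n, exists m (c : R), 0 <= c /\
      forall x, fsn F n (T x) <= c * fsn E m x).

Definition multiplicative_map E F (T : fcar E -> fcar F) : Prop :=
  forall x y, T (fmul x y) = fmul (T x) (T y).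

Definition falg_iso E F : Prop :=
  exists (phi : fcar E -> fcar F) (psi : fcar F -> fcar E),
    cancel phi psi /\ cancel psi phi /\
    cont_linear phi /\ cont_linear psi /\ multiplicative_map phi.

Definition lin_comb E (cs : seq R[i]) (xs : seq (fcar E)) : fcar E :=
  foldr (fun p acc => fadd (fscale p.1 p.2) acc) (fzero E) (zip cs xs).

Definition finite_rank E F (T : fcar E -> fcar F) : Prop :=
  exists xs : seq (fcar F), forall x, exists cs, T x = lin_comb cs xs.

Definition precompact E (K : set (fcar E)) : Prop :=
  forall n (e : R), 0 < e -> exists (s : nat -> fcar E) (N : nat),
    forall x, K x -> exists k, (k < N)%N /\ fsn E n (fsub x (s k)) < e.

Definition approx_prop E : Prop :=
  forall T : fcar E -> fcar E, cont_linear T ->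
  forall K, precompact K ->
  forall n (e : R), 0 < e ->
  exists F : fcar E -> fcar E, cont_linear F /\ finite_rank F /\
    forall x, K x -> fsn E n (fsub (T x) (F x)) < e.

(* elements of the algebraic tensor product E (x) E are represented by
   finite lists of elementary tensors *)
Definition tensor E := seq (fcar E * fcar E).

Definition bilinear_form E (phi : fcar E -> fcar E -> R[i]) : Prop :=
  (forall x y z, phi (fadd x y) z = phi x z + phi y z) /\
  (forall x y z, phi x (fadd y z) = phi x y + phi x z) /\
  (forall c x y, phi (fscale c x) y = c * phi x y) /\
  (forall c x y, phi x (fscale c y) = c * phi x y).

Definition tsum E (phi : fcar E -> fcar E -> R[i]) (t : tensor E) : R[i] :=
  \sum_(p <- t) phi p.1 p.2.

(* two representations denote the same element of E (x) E *)
Definition teq E (t s : tensor E) : Prop :=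
  forall phi, bilinear_form phi -> tsum phi t = tsum phi s.

Definition pinorm E (n : nat) (t : tensor E) : R :=
  inf [set r : R | exists s : tensor E, teq s t /\
         r = \sum_(p <- s) (fsn E n p.1 * fsn E n p.2)].

Definition tsub E (t s : tensor E) : tensor E :=
  t ++ map (fun p => (fopp p.1, p.2)) s.

Definition tdelta E (t : tensor E) : fcar E :=
  foldr (fun p acc => fadd (fmul p.1 p.2) acc) (fzero E) t.

Definition lact E (a : fcar E) (t : tensor E) : tensor E :=
  map (fun p => (fmul a p.1, p.2)) t.
Definition ract E (t : tensor E) (a : fcar E) : tensor E :=
  map (fun p => (p.1, fmul p.2 a)) t.

(* Elements of the completion E (^x) E are given by pi-Cauchy sequences
   of elements of E (x) E. *)
Definition tcauchy E (T : nat -> tensor E) : Prop :=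
  forall n (e : R), 0 < e -> exists N, forall k l, (N <= k)%N -> (N <= l)%N ->
    pinorm n (tsub (T k) (T l)) < e.

(* contractible: there is a diagonal T in E (^x) E with
   Delta(T) a = a  and  a.T = T.a  for all a *)
Definition contractible E : Prop :=
  exists T : nat -> tensor E, tcauchy T /\
  (forall a n (e : R), 0 < e -> exists N, forall k, (N <= k)%N ->
      fsn E n (fsub (fmul (tdelta (T k)) a) a) < e) /\
  (forall a n (e : R), 0 < e -> exists N, forall k, (N <= k)%N ->
      pinorm n (tsub (lact a (T k)) (ract (T k) a)) < e).

Definition zero_nbhd E (V : set (fcar E)) : Prop :=
  exists n (e : R), 0 < e /\ [set x | fsn E n x < e] `<=` V.

Definition nbhd_base E (A : Type) (V : A -> set (fcar E)) : Prop :=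
  (forall a, zero_nbhd (V a)) /\
  (forall W, zero_nbhd W -> exists a, V a `<=` W).

Definition bdd_set E (S : set (fcar E)) : Prop :=
  forall n, exists M : R, forall x, S x -> fsn E n x <= M.

Definition fund_bdd E (A : Type) (W : A -> set (fcar E)) : Prop :=
  (forall a, bdd_set (W a)) /\
  (forall S, bdd_set S -> exists a, S `<=` W a).

Definition ultrafilter (I : Type) (U : set (set I)) : Prop :=
  U setT /\ ~ U set0 /\
  (forall A B, U A -> A `<=` B -> U B) /\
  (forall A B, U A -> U B -> U (A `&` B)) /\
  (forall A, U A \/ U (~` A)).

Definition countably_incomplete (I : Type) (U : set (set I)) : Prop :=
  exists En : nat -> set I, (forall n, U (En n)) /\ \bigcap_n En n = set0.

Definition good_for (I : Type) (U : set (set I)) (B : Type) : Prop :=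
  forall f : set B -> set I,
    (forall u, finite_set u -> U (f u)) ->
    (forall u w, finite_set u -> finite_set w -> u `<=` w -> f w `<=` f u) ->
  exists g : set B -> set I,
    (forall u, finite_set u -> U (g u)) /\
    (forall u w, finite_set u -> finite_set w -> g (u `|` w) = g u `&` g w) /\
    (forall u, finite_set u -> g u `<=` f u).

(* U is aleph(E)^+-good, with aleph(E)^+ = 2^aleph(E) and
   aleph(E) = max(aleph_U(E), aleph_B(E)); A1, A2 index a zero-neighbourhood
   base and a fundamental family of bounded sets of least cardinality.
   |B| <= 2^max(|A1|,|A2|)  iff  |B| <= 2^|A1| or |B| <= 2^|A2|. *)
Definition aleph_plus_good (I : Type) (U : set (set I)) E : Prop :=
  exists (A1 A2 : Type) (V : A1 -> set (fcar E)) (W : A2 -> set (fcar E)),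
    nbhd_base V /\
    (forall (A' : Type) (V' : A' -> set (fcar E)), nbhd_base V' ->
        exists h : A1 -> A', injective h) /\
    fund_bdd W /\
    (forall (A' : Type) (W' : A' -> set (fcar E)), fund_bdd W' ->
        exists h : A2 -> A', injective h) /\
    (forall B : Type,
        ((exists h : B -> (A1 -> bool), injective h) \/
         (exists h : B -> (A2 -> bool), injective h)) -> good_for U B).

Section Ultrapower.
Variables (I : Type) (U : set (set I)) (E : falg_ops R).

Definition bounded_fam (x : I -> fcar E) : Prop :=
  forall n, exists M : R, forall i, fsn E n (x i) <= M.

Definition ulim (a : I -> R) (l : R) : Prop :=
  forall e : R, 0 < e -> U [set i | `|a i - l| < e].

Definition ulimit (a : I -> R) : R := xget 0 [set l | ulim a l].

Definition unegl (x : I -> fcar E) : Prop :=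
  forall n, ulim (fun i => fsn E n (x i)) 0.

Definition urel (x y : I -> fcar E) : Prop :=
  unegl (fun i => fsub (x i) (y i)).

Definition ucls_set (x : I -> fcar E) : set (I -> fcar E) :=
  [set y | bounded_fam y /\ urel x y].

(* the ultrapower l_inf(I,E)/N_U as the type of equivalence classes *)
Definition ucar : Type :=
  {X : set (I -> fcar E) | exists x, bounded_fam x /\ X = ucls_set x}.

Lemma bounded_const (c : fcar E) : bounded_fam (fun _ => c).
Proof. by move=> n; exists (fsn E n c) => i; exact: lexx. Qed.

Definition unormal (x : I -> fcar E) : I -> fcar E :=
  if pselect (bounded_fam x) then x else (fun _ => fzero E).

Lemma unormal_bounded x : bounded_fam (unormal x).
Proof. unfold unormal; destruct (pselect (bounded_fam x)) as [h|h]; [exact h | exact: bounded_const]. Qed.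

(* class of a family (families that are not bounded are sent to 0;
   this case never arises for the operations below) *)
Definition ucls (x : I -> fcar E) : ucar :=
  exist _ (ucls_set (unormal x))
    (ex_intro _ (unormal x) (conj (unormal_bounded x) erefl)).

Definition urep (X : ucar) : I -> fcar E := proj1_sig (cid (proj2_sig X)).

Definition ultrapower : falg_ops R := @FAlgOps R ucar
  (ucls (fun _ => fzero E))
  (fun X Y => ucls (fun i => fadd (urep X i) (urep Y i)))
  (fun X => ucls (fun i => fopp (urep X i)))
  (fun X Y => ucls (fun i => fmul (urep X i) (urep Y i)))
  (fun c X => ucls (fun i => fscale c (urep X i)))
  (fun n X => ulimit (fun i => fsn E n (urep X i))).

End Ultrapower.

Definition CN : falg_ops R := @FAlgOps R (nat -> R[i])
  (fun _ => 0)
  (fun x y k => x k + y k)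
  (fun x k => - x k)
  (fun x y k => x k * y k)
  (fun c x k => c * x k)
  (fun n x => \big[Num.max/0]_(k < n.+1) Normc.normc (x k)).

End General.

(* Main.v *)
Require Import Defs.
From mathcomp Require Import all_boot all_order all_algebra.
From mathcomp Require Import all_classical all_reals.
From mathcomp.real_closed Require Import complex.
From mathcomp Require Import ring lra.
Set Implicit Arguments.
Unset Strict Implicit.
Unset Printing Implicit Defensive.
Import Order.TTheory GRing.Theory Num.Theory.
Local Open Scope classical_set_scope.
Local Open Scope ring_scope.

Section Transfer.
Variables (R : realType) (E F : falg_ops R).
Variables (phi : fcar E -> fcar F) (psi : fcar F -> fcar E).
Hypotheses (pK : cancel phi psi) (sK : cancel psi phi).
Hypothesis p0 : phi (fzero E) = fzero F.
Hypothesis pD : forall x y, phi (fadd x y) = fadd (phi x) (phi y).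
Hypothesis pN : forall x, phi (fopp x) = fopp (phi x).
Hypothesis pM : forall x y, phi (fmul x y) = fmul (phi x) (phi y).
Hypothesis pZ : forall c x, phi (fscale c x) = fscale c (phi x).
Hypothesis pS : forall n x, fsn F n (phi x) = fsn E n x.

Let s0 : psi (fzero F) = fzero E. Proof. by rewrite -p0 pK. Qed.
Let sD x y : psi (fadd x y) = fadd (psi x) (psi y).
Proof. by apply: (can_inj pK); rewrite pD !sK. Qed.
Let sZ c x : psi (fscale c x) = fscale c (psi x).
Proof. by apply: (can_inj pK); rewrite pZ !sK. Qed.
Let sS n x : fsn E n (psi x) = fsn F n x.
Proof. by rewrite -pS sK. Qed.

Lemma tr_iso : falg_iso E F.
Proof.
exists phi, psi; split=> //; split=> //; split.
  split=> //; split=> // n; exists n, 1; split=> // x; by rewrite pS mul1r.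
split.
  split=> //; split=> // n; exists n, 1; split=> // x; by rewrite sS mul1r.
exact: pM.
Qed.

Lemma tr_approx : approx_prop F -> approx_prop E.
Proof.
move=> AP T [TD [TZ TS]] K Kpc n e e0.
pose T' := fun y => phi (T (psi y)).
have cT' : cont_linear T'.
  split; first by move=> y z; rewrite /T' sD TD pD.
  split; first by move=> c y; rewrite /T' sZ TZ pZ.
  move=> k; have [m [c [c0 h]]] := TS k; exists m, c; split=> // y.
  by rewrite /T' pS -(sS m y); apply: h.
pose K' := fun y => K (psi y).
have K'pc : precompact K'.
  move=> k d d0; have [s [N h]] := Kpc k d d0; exists (phi \o s), N => y Ky.
  have [j [jN hj]] := h _ Ky; exists j; split=> //.
  by rewrite /fsub /= -{1}(sK y) -pN -pD pS.
have [G [[GD [GZ GS]] [[xs hxs] hG]]] := AP T' cT' K' K'pc n e e0.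
exists (fun x => psi (G (phi x))); split.
  split; first by move=> y z; rewrite pD GD sD.
  split; first by move=> c y; rewrite pZ GZ sZ.
  move=> k; have [m [c [c0 h]]] := GS k; exists m, c; split=> // y.
  by rewrite sS -(pS m y); apply: h.
split.
  exists (map psi xs) => x; have [cs ->] := hxs (phi x); exists cs.
  rewrite /lin_comb; elim: cs xs {hxs} => [|c cs IH] [|y ys] //=; by rewrite sD sZ IH.
move=> x Kx; rewrite -pS /fsub pD pN sK.
have := hG (phi x); rewrite /K' /T' pK; by apply.
Qed.

Definition mapp (A B : falg_ops R) (f : fcar A -> fcar B) (t : tensor A) : tensor B :=
  map (fun p => (f p.1, f p.2)) t.

Lemma teq_tr s t : teq s t <-> teq (mapp phi s) (mapp phi t).
Proof.
split=> h phiF.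
  move=> [b1 [b2 [b3 b4]]].
  pose phE := fun x y => phiF (phi x) (phi y).
  have bE : bilinear_form phE.
    split; first by move=> x y z; rewrite /phE pD b1.
    split; first by move=> x y z; rewrite /phE pD b2.
    split; first by move=> c x y; rewrite /phE pZ b3.
    by move=> c x y; rewrite /phE pZ b4.
  have := h _ bE; by rewrite /tsum /mapp !big_map.
move=> [b1 [b2 [b3 b4]]].
pose phF := fun x y => phiF (psi x) (psi y).
have bF : bilinear_form phF.
  split; first by move=> x y z; rewrite /phF sD b1.
  split; first by move=> x y z; rewrite /phF sD b2.
  split; first by move=> c x y; rewrite /phF sZ b3.
  by move=> c x y; rewrite /phF sZ b4.
have := h _ bF; rewrite /tsum /mapp !big_map /phF /=.
by under eq_bigr do rewrite !pK; under [X in _ = X -> _]eq_bigr do rewrite !pK.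
Qed.

Lemma mappK t : mapp phi (mapp psi t) = t.
Proof. by elim: t => [|[a b] t IH] //=; rewrite !sK IH. Qed.

Lemma pinorm_tr n t : pinorm n t = pinorm n (mapp phi t).
Proof.
rewrite /pinorm; congr inf; apply: funext => r; apply: propext; split.
  move=> [s [hs ->]]; exists (mapp phi s); split; first by apply/teq_tr.
  by rewrite /mapp big_map; apply: eq_bigr => p _ /=; rewrite !pS.
move=> [s [hs ->]]; exists (mapp psi s); split; first by apply/teq_tr; rewrite mappK.
by rewrite /mapp big_map; apply: eq_bigr => p _ /=; rewrite !sS.
Qed.

Lemma mapp_tsub t s : mapp phi (tsub t s) = tsub (mapp phi t) (mapp phi s).
Proof. by rewrite /tsub /mapp map_cat -!map_comp; congr cat; apply: eq_map => p /=; rewrite pN. Qed.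
Lemma mapp_lact a t : mapp phi (lact a t) = lact (phi a) (mapp phi t).
Proof. by rewrite /lact /mapp -!map_comp; apply: eq_map => p /=; rewrite pM. Qed.
Lemma mapp_ract a t : mapp phi (ract t a) = ract (mapp phi t) (phi a).
Proof. by rewrite /ract /mapp -!map_comp; apply: eq_map => p /=; rewrite pM. Qed.
Lemma tdelta_tr t : phi (tdelta t) = tdelta (mapp phi t).
Proof. by elim: t => [|p t IH] //=; rewrite pD pM IH. Qed.

Lemma tr_contr : contractible F -> contractible E.
Proof.
move=> [T [tc [hd hm]]]; exists (fun k => mapp psi (T k)); split.
  move=> n e e0; have [N h] := tc n e e0; exists N => k l kN lN.
  by rewrite pinorm_tr mapp_tsub !mappK; apply: h.
split.
  move=> a n e e0; have [N h] := hd (phi a) n e e0; exists N => k kN.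
  by rewrite -pS /fsub pD pN pM tdelta_tr mappK; apply: h.
move=> a n e e0; have [N h] := hm (phi a) n e e0; exists N => k kN.
by rewrite pinorm_tr mapp_tsub mapp_lact mapp_ract mappK; apply: h.
Qed.

End Transfer.

Section CNfacts.
Variable R : realType.
Local Notation C := (R[i]).
Local Notation nc := (@Normc.normc R).

Lemma nc_ge0 (z : C) : 0 <= nc z.
Proof. by case: z => a b; rewrite /Normc.normc sqrtr_ge0. Qed.

Definition nm n (x : nat -> C) : R := \big[Num.max/0]_(k < n.+1) nc (x k).

Lemma fsnE n x : fsn (CN R) n x = nm n x. Proof. by []. Qed.

Lemma nm_ge n x k : (k <= n)%N -> nc (x k) <= nm n x.
Proof.
move=> kn; have kn' : (k < n.+1)%N by [].
exact: (le_bigmax _ (fun i : 'I_n.+1 => nc (x i)) (Ordinal kn')).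
Qed.

Lemma nm_ge0 n x : 0 <= nm n x.
Proof. exact: le_trans (nc_ge0 (x 0%N)) (nm_ge x (leq0n n)). Qed.

Lemma nm_le n x (e : R) : 0 <= e -> (forall k, (k <= n)%N -> nc (x k) <= e) -> nm n x <= e.
Proof. by move=> e0 h; apply: bigmax_le => // i _; apply: h; rewrite -ltnS. Qed.

Lemma nm_lt n x (e : R) : 0 < e -> (forall k, (k <= n)%N -> nc (x k) < e) -> nm n x < e.
Proof. by move=> e0 h; apply: bigmax_lt => // i _; apply: h; rewrite -ltnS. Qed.

Lemma nm0 n x : (forall k, (k <= n)%N -> x k = 0) -> nm n x = 0.
Proof.
move=> h; apply/eqP; rewrite eq_le nm_ge0 andbT; apply: nm_le => // k kn.
by rewrite h // Normc.normc0.
Qed.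

Definition ev (j : nat) : nat -> C := fun i => (i == j)%:R.

Lemma T0 (T : fcar (CN R) -> fcar (CN R)) : cont_linear T -> T (fzero _) = fzero _.
Proof.
move=> [_ [TZ _]]; have -> : fzero (CN R) = fscale (0 : C) (fzero (CN R)).
  by apply: funext => k /=; rewrite mul0r.
by rewrite TZ; apply: funext => k /=; rewrite !mul0r.
Qed.

Lemma T_lin (T : fcar (CN R) -> fcar (CN R)) : cont_linear T ->
  forall cs xs, T (lin_comb cs xs) = lin_comb cs (map T xs).
Proof.
move=> cT; have T00 := T0 cT; move: cT => [TD [TZ _]].
rewrite /lin_comb; elim=> [|c cs IH] [|y ys] //=; by rewrite TD TZ IH.
Qed.

Lemma lin_iota (x : nat -> C) N a k :
  (@lin_comb R (CN R) (map x (iota a N)) (map ev (iota a N)) : nat -> C) k =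
  if ((a <= k) && (k < a + N))%N then x k else 0.
Proof.
elim: N a => [|N IH] a /=; first by rewrite addn0; case: (leqP a k) => h //; rewrite ltnNge h.
rewrite -[LHS]/(x a * ev a k + (@lin_comb R (CN R) (map x (iota a.+1 N)) (map ev (iota a.+1 N)) : nat -> C) k).
rewrite IH /ev; case: (ltngtP k a) => h.
- by rewrite /= mulr0 addr0.
- by rewrite mulr0 add0r addSnnS.
- by rewrite h mulr1 addr0 /= addnS ltnS leq_addr.
Qed.

Lemma CN_approx : approx_prop (CN R).
Proof.
move=> T cT K _ n e e0; have cT' := cT; move: cT' => [TD [TZ TS]].
have [m [c [c0 hc]]] := TS n.
pose P (y : nat -> C) : nat -> C := fun k => if (k <= m)%N then y k else 0.
have nmP k y : nm k (P y) <= nm k y.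
  apply: nm_le; first exact: nm_ge0.
  move=> j jk; rewrite /P; case: (j <= m)%N; first exact: nm_ge.
  by rewrite Normc.normc0 nm_ge0.
exists (fun y => T (P y)); split.
  split.
    move=> y z; rewrite -TD; congr T; apply: funext => k /=; rewrite /P.
    by case: (k <= m)%N; rewrite ?addr0.
  split.
    move=> d y; rewrite -TZ; congr T; apply: funext => k /=; rewrite /P.
    by case: (k <= m)%N; rewrite ?mulr0.
  move=> k; have [m' [c' [c'0 h']]] := TS k; exists m', c'; split=> // y.
  apply: le_trans (h' (P y)) _; rewrite fsnE fsnE; exact: ler_wpM2l.
split.
  exists (map (fun j => T (ev j)) (iota 0 m.+1)) => y.
  exists (map y (iota 0 m.+1)).
  have -> : P y = @lin_comb R (CN R) (map y (iota 0 m.+1)) (map ev (iota 0 m.+1)).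
    by apply: funext => k; rewrite lin_iota /P add0n ltnS.
  by rewrite (T_lin cT) -map_comp.
move=> y _.
have -> : fsub (T y) (T (P y)) = T (fsub y (P y)).
  have -> : fsub y (P y) = fadd y (@fscale R (CN R) (-1) (P y)).
    by apply: funext => k /=; rewrite mulN1r.
  rewrite TD TZ; apply: funext => k /=; by rewrite mulN1r.
apply: le_lt_trans (hc _) _; rewrite fsnE.
rewrite (@nm0 m); first by rewrite mulr0.
by move=> k km /=; rewrite /P km subrr.
Qed.


Lemma pin_le n (t s : tensor (CN R)) : teq s t ->
  pinorm n t <= \sum_(p <- s) nm n p.1 * nm n p.2.
Proof.
move=> hs; rewrite /pinorm; apply: ge_inf; last by exists s.
exists 0 => r [s' [_ ->]]; apply: sumr_ge0 => p _; apply: mulr_ge0; exact: nm_ge0.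
Qed.

Lemma nm_ev0 n j : (n < j)%N -> nm n (ev j) = 0.
Proof.
move=> nj; apply: nm0 => k kn; rewrite /ev (_ : (k == j) = false) //; apply/negbTE.
by rewrite neq_ltn (leq_ltn_trans kn nj).
Qed.

Lemma mul_ev_l (a : nat -> C) j : fmul (f:=CN R) a (ev j) = @fscale R (CN R) (a j) (ev j).
Proof. by apply: funext => i /=; rewrite /ev; case: eqP => [->|]; rewrite ?mulr1 ?mulr0. Qed.
Lemma mul_ev_r (a : nat -> C) j : fmul (f:=CN R) (ev j) a = @fscale R (CN R) (a j) (ev j).
Proof. by apply: funext => i /=; rewrite /ev; case: eqP => [->|]; rewrite ?mulr1 ?mul1r ?mulr0 ?mul0r. Qed.
Lemma opp_ev j : fopp (f:=CN R) (ev j) = @fscale R (CN R) (-1) (ev j).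
Proof. by apply: funext => i /=; rewrite mulN1r. Qed.

Definition Tk (k : nat) : tensor (CN R) := map (fun j => (ev j, ev j)) (iota 0 k).

Lemma tdelta_iota a N i :
  (@tdelta R (CN R) (map (fun j => (ev j, ev j)) (iota a N)) : nat -> C) i =
  if ((a <= i) && (i < a + N))%N then 1 else 0.
Proof.
elim: N a => [|N IH] a /=; first by rewrite addn0; case: (leqP a i) => h //; rewrite ltnNge h.
rewrite -[LHS]/(ev a i * ev a i + (@tdelta R (CN R) (map (fun j => (ev j, ev j)) (iota a.+1 N)) : nat -> C) i).
rewrite IH /ev; case: (ltngtP i a) => h.
- by rewrite /= mulr0 addr0.
- by rewrite mulr0 add0r addSnnS.
- by rewrite h mulr1 addr0 /= addnS ltnS leq_addr.
Qed.

Lemma CN_contr : contractible (CN R).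
Proof.
exists Tk; split.
  move=> n e e0; exists n.+1 => k l kN lN.
  pose s := map (fun j => (ev j, ev j)) (iota n.+1 (k - n.+1)) ++
            map (fun j => (fopp (f:=CN R) (ev j), ev j)) (iota n.+1 (l - n.+1)).
  apply: le_lt_trans e0; apply: le_trans (pin_le (s:=s) _ _) _.
    move=> phi [b1 [b2 [b3 b4]]].
    rewrite /tsum /tsub /s /Tk !big_cat !big_map /=.
    have ek : iota 0 k = iota 0 n.+1 ++ iota (0 + n.+1) (k - n.+1) by rewrite -iotaD subnKC.
    have el : iota 0 l = iota 0 n.+1 ++ iota (0 + n.+1) (l - n.+1) by rewrite -iotaD subnKC.
    rewrite ek el !big_cat /= add0n.
    have hA : \sum_(j <- iota 0 n.+1) phi (fopp (f:=CN R) (ev j)) (ev j) =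
              - \sum_(j <- iota 0 n.+1) phi (ev j) (ev j).
      by rewrite -sumrN; apply: eq_bigr => j _; rewrite opp_ev b3 mulN1r.
    rewrite hA; set A := \sum_(j <- _) phi (ev j) (ev j).
    by rewrite addrACA subrr add0r.
  rewrite big_cat !big_map /= !big_seq !big1 ?addr0 // => j;
    rewrite mem_iota => /andP[hj _]; by rewrite nm_ev0 ?mulr0.
split.
  move=> a n e e0; exists n.+1 => k kN; rewrite fsnE.
  rewrite nm0 // => i ni /=; rewrite tdelta_iota /= add0n.
  by rewrite (leq_ltn_trans ni kN) mul1r subrr.
move=> a n e e0; exists 0%N => k _.
apply: le_lt_trans e0; apply: le_trans (pin_le (s:=[::]) _ _) _; last by rewrite big_nil.
move=> phi [b1 [b2 [b3 b4]]].
rewrite /tsum /tsub /lact /ract /Tk big_nil big_cat !big_map /= -big_split /=.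
by rewrite big1 // => j _; rewrite (mul_ev_l a j : (fun k0 => a k0 * ev j k0) = _) (mul_ev_r a j : (fun k0 => ev j k0 * a k0) = _) (opp_ev j : (fun k0 => - ev j k0) = _) b3 b4 b3 mulN1r mulrN subrr.
Qed.

End CNfacts.

Section Ultra.
Variables (R : realType) (I : Type) (U : set (set I)).
Hypothesis HU : ultrafilter U.
Local Notation C := (R[i]).
Local Notation nc := (@Normc.normc R).

Lemma Uup A B : U A -> A `<=` B -> U B.
Proof. by case: HU => _ [_ [h _]]; apply: h. Qed.
Lemma UI A B : U A -> U B -> U (A `&` B).
Proof. by case: HU => _ [_ [_ [h _]]]; apply: h. Qed.
Lemma Uc A : U A \/ U (~` A).
Proof. by case: HU => _ [_ [_ [_ h]]]; apply: h. Qed.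
Lemma UT : U setT. Proof. by case: HU. Qed.
Lemma Une A : U A -> exists i, A i.
Proof.
move=> UA; apply: contrapT => hne; case: HU => _ [U0 _]; apply: U0.
have -> : set0 = A; last by [].
by apply/seteqP; split => // i Ai; apply: hne; exists i.
Qed.
Lemma UI2 (A B D : set I) : U A -> U B -> (forall i, A i -> B i -> D i) -> U D.
Proof. by move=> UA UB h; apply: Uup (UI UA UB) _ => i [ha hb]; apply: h. Qed.

Lemma Ufin (A : nat -> set I) n : (forall k, (k <= n)%N -> U (A k)) ->
  U [set i | forall k, (k <= n)%N -> A k i].
Proof.
elim: n => [|n IH] h.
  by apply: (Uup (h 0%N (leqnn 0))) => i Ai k; rewrite leqn0 => /eqP ->.
apply: (UI2 (IH (fun k kn => h k (leqW kn))) (h n.+1 (leqnn _))) => i h1 h2 k.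
by rewrite leq_eqVlt => /orP[/eqP -> //|]; rewrite ltnS; apply: h1.
Qed.

Lemma ulim_uniq (a : I -> R) l l' : ulim U a l -> ulim U a l' -> l = l'.
Proof.
move=> h h'; apply/eqP; rewrite -subr_eq0 -normr_eq0; apply: contrapT => /negP hn.
have e0 : 0 < `|l - l'| / 2 by rewrite divr_gt0 // lt_neqAle eq_sym hn normr_ge0.
have [i [hi hi']] := Une (UI (h _ e0) (h' _ e0)).
have : `|l - l'| < `|l - l'| / 2 + `|l - l'| / 2.
  rewrite {1}(_ : l - l' = (a i - l') - (a i - l)); last by ring.
  apply: le_lt_trans (ler_normB _ _) _; exact: ltrD hi' hi.
by rewrite -splitr ltxx.
Qed.

Lemma ulimit_eq (a : I -> R) l : ulim U a l -> ulimit U a = l.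
Proof. move=> h; apply: (ulim_uniq _ h); apply: xgetPex; by exists l. Qed.

Lemma ulim_ex (a : I -> R) M : (forall i, `|a i| <= M) -> exists l, ulim U a l.
Proof.
move=> hM; pose S := [set t : R | U [set i | t <= a i]].
have S0 : S (- M) by apply: (Uup UT) => i _; have := hM i; rewrite ler_norml => /andP[].
have Sub : ubound S (M + 1).
  move=> t St; apply: contrapT => /negP; rewrite -ltNge => ht.
  have [i hi] := Une St; have := hM i; rewrite ler_norml => /andP[_ h2].
  have : M + 1 <= M by apply: le_trans (ltW ht) (le_trans hi h2).
  move=> ?; lra.
have hs : has_sup S by split; [exists (- M) | exists (M + 1)].
exists (sup S) => e e0.
have [t St ht] := sup_adherent e0 hs.
have nS : ~ S (sup S + e).
  move=> Se; have := sup_upper_bound hs Se; move=> /= ?; lra.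
have Uc' : U [set i | a i < sup S + e].
  case: (Uc [set i | sup S + e <= a i]) => // h; apply: (Uup h) => i /=; by move=> /negP; rewrite -ltNge.
apply: (UI2 St Uc') => i /= h1 h2; rewrite ltr_norml; apply/andP; split; lra.
Qed.

Lemma ncu_ge0 (z : C) : 0 <= nc z.
Proof. by case: z => a b; rewrite /Normc.normc sqrtr_ge0. Qed.
Lemma ncB (x y : C) : nc (x - y) = nc (y - x).
Proof. by rewrite -normcN opprB. Qed.
Lemma nc_tri (x y z : C) : nc (x - z) <= nc (x - y) + nc (y - z).
Proof. by rewrite (_ : x - z = (x - y) + (y - z)); [apply: le_normcD | ring]. Qed.
Lemma Re_le_nc (w : C) : `|complex.Re w| <= nc w.
Proof.
case: w => a b /=; rewrite -sqrtr_sqr; apply: ler_wsqrtr; rewrite lerDl; exact: sqr_ge0.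
Qed.
Lemma Im_le_nc (w : C) : `|complex.Im w| <= nc w.
Proof.
case: w => a b /=; rewrite -sqrtr_sqr; apply: ler_wsqrtr; rewrite lerDr; exact: sqr_ge0.
Qed.
Lemma nc_le_ReIm (w : C) : nc w <= `|complex.Re w| + `|complex.Im w|.
Proof.
case: w => a b; rewrite {1}(_ : (a +i* b)%C = (a +i* 0)%C + (0 +i* b)%C); last first.
  by rewrite /GRing.add /= addr0 add0r.
apply: le_trans (le_normcD _ _) _.
by rewrite /Normc.normc /= expr0n /= addr0 add0r !sqrtr_sqr.
Qed.

Definition Cl (z w : I -> C) := forall e : R, 0 < e -> U [set i | nc (z i - w i) < e].

Lemma Cl_refl z : Cl z z.
Proof. by move=> e e0; apply: (Uup UT) => i _ /=; rewrite subrr Normc.normc0. Qed.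
Lemma Cl_sym z w : Cl z w -> Cl w z.
Proof. by move=> h e e0; apply: (Uup (h e e0)) => i /=; rewrite ncB. Qed.
Lemma Cl_trans z w v : Cl z w -> Cl w v -> Cl z v.
Proof.
move=> h1 h2 e e0; have e2 : 0 < e / 2 by rewrite divr_gt0.
apply: (UI2 (h1 _ e2) (h2 _ e2)) => i /= a b.
apply: le_lt_trans (nc_tri _ (w i) _) _; rewrite (splitr e); exact: ltrD.
Qed.
Lemma Cl_add z z' w w' : Cl z z' -> Cl w w' -> Cl (fun i => z i + w i) (fun i => z' i + w' i).
Proof.
move=> h1 h2 e e0; have e2 : 0 < e / 2 by rewrite divr_gt0.
apply: (UI2 (h1 _ e2) (h2 _ e2)) => i /= a b.
rewrite (_ : z i + w i - (z' i + w' i) = (z i - z' i) + (w i - w' i)); last by ring.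
apply: le_lt_trans (le_normcD _ _) _; rewrite (splitr e); exact: ltrD.
Qed.
Lemma Cl_opp z z' : Cl z z' -> Cl (fun i => - z i) (fun i => - z' i).
Proof. by move=> h e e0; apply: (Uup (h e e0)) => i /=; rewrite -opprD normcN. Qed.
Lemma Cl_scale (c : C) z z' : Cl z z' -> Cl (fun i => c * z i) (fun i => c * z' i).
Proof.
move=> h e e0; have K0 : 0 < nc c + 1 by rewrite ltr_pwDr // ncu_ge0.
have d0 : 0 < e / (nc c + 1) by rewrite divr_gt0.
apply: (Uup (h _ d0)) => i /= hi.
rewrite -mulrBr Normc.normcM.
have hn := ncu_ge0 (z i - z' i).
apply: le_lt_trans (_ : nc c * nc (z i - z' i) <= (nc c + 1) * nc (z i - z' i)) _.
  by rewrite ler_wpM2r // lerDl.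
by rewrite mulrC -ltr_pdivlMr.
Qed.
Lemma Cl_mul (z w : I -> C) l m M : Cl z (fun _ => l) -> Cl w (fun _ => m) ->
  (forall i, nc (z i) <= M) -> Cl (fun i => z i * w i) (fun _ => l * m).
Proof.
move=> h1 h2 hM e e0.
have K0 : 0 < `|M| + nc m + 1 by rewrite ltr_pwDr // addr_ge0 ?ncu_ge0.
pose d := e / (`|M| + nc m + 1).
have d0 : 0 < d by rewrite divr_gt0.
have ed : e = `|M| * d + nc m * d + d.
  by rewrite /d; field; rewrite gt_eqF.
apply: (UI2 (h1 _ d0) (h2 _ d0)) => i /= a b.
rewrite (_ : z i * w i - l * m = z i * (w i - m) + (z i - l) * m); last by ring.
apply: le_lt_trans (le_normcD _ _) _; rewrite !Normc.normcM.
have p1 : nc (z i) * nc (w i - m) <= `|M| * d.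
  apply: ler_pM; rewrite ?ncu_ge0 //; last exact: ltW.
  by apply: le_trans (hM i) _; exact: ler_norm.
have p2 : nc (z i - l) * nc m <= d * nc m.
  by apply: ler_wpM2r; [exact: ncu_ge0 | exact: ltW].
rewrite ed; rewrite [d * _]mulrC in p2; lra.
Qed.

Lemma Cl_ex (z : I -> C) M : (forall i, nc (z i) <= M) -> exists l, Cl z (fun _ => l).
Proof.
move=> hM.
have [la hla] := ulim_ex (a := fun i => complex.Re (z i)) (M := M) (fun i => le_trans (Re_le_nc _) (hM i)).
have [lb hlb] := ulim_ex (a := fun i => complex.Im (z i)) (M := M) (fun i => le_trans (Im_le_nc _) (hM i)).
exists (la +i* lb)%C => e e0; have e2 : 0 < e / 2 by rewrite divr_gt0.
apply: (UI2 (hla _ e2) (hlb _ e2)) => i /= a b.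
apply: le_lt_trans (nc_le_ReIm _) _.
have -> : complex.Re (z i - (la +i* lb)%C) = complex.Re (z i) - la by case: (z i).
have -> : complex.Im (z i - (la +i* lb)%C) = complex.Im (z i) - lb by case: (z i).
rewrite (splitr e); exact: ltrD.
Qed.

Lemma Cl_uniq z l l' : Cl z (fun _ => l) -> Cl z (fun _ => l') -> l = l'.
Proof.
move=> h1 h2; have h := Cl_trans (Cl_sym h1) h2.
apply/eqP; rewrite -subr_eq0; apply/eqP; apply: Normc.eq0_normc.
apply/eqP; rewrite eq_le ncu_ge0 andbT; apply: contrapT => /negP; rewrite -ltNge => hp.
have [i /= hi] := Une (h _ hp); by rewrite ltxx in hi.
Qed.

End Ultra.

Lemma sig_eq (A : Type) (P : A -> Prop) (u v : {x | P x}) : proj1_sig u = proj1_sig v -> u = v.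
Proof. case: u => a pa; case: v => b pb /= eab; subst b; congr exist; apply: Prop_irrelevance. Qed.

Section Iso.
Variables (R : realType) (I : Type) (U : set (set I)).
Hypothesis HU : ultrafilter U.
Local Notation C := (R[i]).
Local Notation nc := (@Normc.normc R).
Local Notation E := (ultrapower U (CN R)).
Local Notation Cl := (Cl U).
Local Notation bnd := (@bounded_fam R I (CN R)).
Local Notation urel' := (@urel R I U (CN R)).
Local Notation ucls' := (@ucls R I U (CN R)).
Local Notation ucls_set' := (@ucls_set R I U (CN R)).

Lemma nm_bnd n (a : nat -> C) g : 0 <= g -> (forall k, (k <= n)%N -> nc (a k) <= g) -> nm n a <= g.
Proof. exact: nm_le. Qed.

Lemma urepP (X : fcar E) : bounded_fam (urep X) /\ proj1_sig X = ucls_set' (urep X).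
Proof. exact: (proj2_sig (cid (proj2_sig X))). Qed.

Lemma unormalE (x : I -> nat -> C) : bnd x -> @unormal R I (CN R) x = x.
Proof. by move=> h; rewrite /unormal; case: pselect. Qed.

Lemma urel_Cl (x y : I -> nat -> C) :
  urel' x y <-> forall k, Cl (fun i => x i k) (fun i => y i k).
Proof.
split.
  move=> h k e e0; apply: (Uup HU (h k e e0)) => i /=.
  rewrite subr0 ger0_norm; last exact: (@nm_ge0 R k (fun k0 => x i k0 - y i k0)).
  move=> h'; apply: le_lt_trans h'; exact: (@nm_ge R k (fun k0 => x i k0 - y i k0) k (leqnn k)).
move=> h n e e0.
have := Ufin HU (A := fun k => [set i | nc (x i k - y i k) < e]) (n := n) (fun k _ => h k e e0).
move=> hU; apply: (Uup HU hU) => i /= hi.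
rewrite subr0 ger0_norm; last exact: (@nm_ge0 R n (fun k0 => x i k0 - y i k0)).
exact: (@nm_lt R n (fun k0 => x i k0 - y i k0)).
Qed.

Lemma urel_refl x : urel' x x.
Proof. apply/urel_Cl => k; exact: Cl_refl. Qed.

Lemma ucls_rep x : bnd x -> urel' x (urep (ucls' x)).
Proof.
move=> bx; have [br hX] := urepP (ucls' x).
have : ucls_set' (urep (ucls' x)) (urep (ucls' x)) by split => //; exact: urel_refl.
by rewrite -hX /= unormalE // => -[].
Qed.

Definition cl (z : I -> C) : C := xget 0 [set l | Cl z (fun _ => l)].
Definition phiU (X : fcar E) : nat -> C := fun k => cl (fun i => urep X i k).
Definition psiU (y : nat -> C) : fcar E := ucls' (fun _ => y).

Lemma bnd_coord (x : I -> nat -> C) k : bnd x -> exists M, forall i, nc (x i k) <= M.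
Proof. move=> /(_ k) [M hM]; exists M => i; apply: le_trans (hM i); exact: nm_ge. Qed.

Lemma clP z M : (forall i, nc (z i) <= M) -> Cl z (fun _ => cl z).
Proof. move=> hM; exact: (xgetPex 0 (P:=[set l | Cl z (fun _ => l)]) (Cl_ex HU hM)). Qed.

Lemma phiP (X : fcar E) k : Cl (fun i => urep X i k) (fun _ => phiU X k).
Proof. have [M hM] := bnd_coord k (proj1 (urepP X)); exact: clP hM. Qed.

Lemma phi_ucls x : bnd x -> forall k, Cl (fun i => x i k) (fun _ => phiU (ucls' x) k).
Proof.
move=> bx k.
have h1 : Cl (fun i => x i k) (fun i => urep (ucls' x) i k).
  by have := ucls_rep bx; move/urel_Cl; apply.
exact: (Cl_trans HU h1 (phiP _ k)).
Qed.

Lemma phi_uclsE x l : bnd x -> (forall k, Cl (fun i => x i k) (fun _ => l k)) ->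
  phiU (ucls' x) = l.
Proof.
move=> bx h; apply: funext => k; apply: (Cl_uniq HU) (h k).
exact: phi_ucls.
Qed.


Lemma nm_add n (a b : nat -> C) : nm n (fun k => a k + b k) <= nm n a + nm n b.
Proof.
apply: nm_le; first by rewrite addr_ge0 ?nm_ge0.
move=> k kn; apply: le_trans (le_normcD _ _) _; apply: lerD; exact: nm_ge.
Qed.
Lemma nm_opp n (a : nat -> C) : nm n (fun k => - a k) <= nm n a.
Proof. apply: nm_le; first exact: nm_ge0. by move=> k kn; rewrite normcN; apply: nm_ge. Qed.
Lemma nm_mul n (a b : nat -> C) : nm n (fun k => a k * b k) <= nm n a * nm n b.
Proof.
apply: nm_le; first by rewrite mulr_ge0 ?nm_ge0.
move=> k kn; rewrite Normc.normcM; apply: ler_pM; rewrite ?nc_ge0 //; exact: nm_ge.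
Qed.
Lemma nm_scale n (c : C) (a : nat -> C) : nm n (fun k => c * a k) <= nc c * nm n a.
Proof.
apply: nm_le; first by rewrite mulr_ge0 ?nm_ge0 ?nc_ge0.
move=> k kn; rewrite Normc.normcM; apply: ler_wpM2l; rewrite ?nc_ge0 //; exact: nm_ge.
Qed.

Lemma bnd_rep (X : fcar E) : bnd (urep X).
Proof. exact: (proj1 (urepP X)). Qed.

Lemma bnd_add x y : bnd x -> bnd y -> bnd (fun i k => x i k + y i k).
Proof.
move=> bx hy n; have [M1 h1] := bx n; have [M2 h2] := hy n; exists (M1 + M2) => i.
apply: le_trans (nm_add _ _ _) _; exact: lerD (h1 i) (h2 i).
Qed.
Lemma bnd_opp x : bnd x -> bnd (fun i k => - x i k).
Proof. move=> bx n; have [M1 h1] := bx n; exists M1 => i; apply: le_trans (nm_opp _ _) _; exact: h1. Qed.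
Lemma bnd_mul x y : bnd x -> bnd y -> bnd (fun i k => x i k * y i k).
Proof.
move=> bx hy n; have [M1 h1] := bx n; have [M2 h2] := hy n; exists (M1 * M2) => i.
apply: le_trans (nm_mul _ _ _) _; apply: ler_pM; rewrite ?nm_ge0 //; [exact: h1 | exact: h2].
Qed.
Lemma bnd_scale (c : C) x : bnd x -> bnd (fun i k => c * x i k).
Proof.
move=> bx n; have [M1 h1] := bx n; exists (nc c * M1) => i.
apply: le_trans (nm_scale _ _ _) _; apply: ler_wpM2l; rewrite ?nc_ge0 //; exact: h1.
Qed.

Lemma pD (X Y : fcar E) : phiU (fadd X Y) = fadd (f:=CN R) (phiU X) (phiU Y).
Proof.
apply: phi_uclsE; first by apply: bnd_add; apply: bnd_rep.
move=> k; exact: (Cl_add HU (phiP X k) (phiP Y k)).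
Qed.
Lemma pN (X : fcar E) : phiU (fopp X) = fopp (f:=CN R) (phiU X).
Proof.
apply: phi_uclsE; first by apply: bnd_opp; apply: bnd_rep.
move=> k; exact: (Cl_opp HU (phiP X k)).
Qed.
Lemma pZ c (X : fcar E) : phiU (fscale c X) = fscale (f:=CN R) c (phiU X).
Proof.
apply: phi_uclsE; first by apply: bnd_scale; apply: bnd_rep.
move=> k; exact: (Cl_scale HU c (phiP X k)).
Qed.
Lemma pM (X Y : fcar E) : phiU (fmul X Y) = fmul (f:=CN R) (phiU X) (phiU Y).
Proof.
apply: phi_uclsE; first by apply: bnd_mul; apply: bnd_rep.
move=> k; have [M hM] := bnd_coord k (bnd_rep X).
exact: (Cl_mul HU (phiP X k) (phiP Y k) hM).
Qed.
Lemma p0 : phiU (fzero E) = fzero (CN R).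
Proof.
apply: phi_uclsE; first exact: bounded_const.
move=> k; exact: Cl_refl.
Qed.


Lemma nm_lip n (a b : nat -> C) : `|nm n a - nm n b| <= nm n (fun k => a k - b k).
Proof.
have h1 : nm n a <= nm n (fun k => a k - b k) + nm n b.
  apply: nm_le; first by rewrite addr_ge0 ?nm_ge0.
  move=> k kn; rewrite {1}(_ : a k = (a k - b k) + b k); last by ring.
  apply: le_trans (le_normcD _ _) _; apply: lerD.
    exact: (@nm_ge R n (fun k => a k - b k) k kn).
  exact: nm_ge.
have h2 : nm n b <= nm n (fun k => a k - b k) + nm n a.
  apply: nm_le; first by rewrite addr_ge0 ?nm_ge0.
  move=> k kn; rewrite {1}(_ : b k = - (a k - b k) + a k); last by ring.
  apply: le_trans (le_normcD _ _) _; rewrite normcN; apply: lerD.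
    exact: (@nm_ge R n (fun k => a k - b k) k kn).
  exact: nm_ge.
rewrite ler_norml; apply/andP; split; lra.
Qed.

Lemma pS n (X : fcar E) : fsn (CN R) n (phiU X) = fsn E n X.
Proof.
symmetry; apply: (ulimit_eq HU) => e e0.
have := Ufin HU (A := fun k => [set i | nc (urep X i k - phiU X k) < e]) (n := n)
  (fun k _ => phiP X k e0).
move=> hU; apply: (Uup HU hU) => i /= hi.
apply: le_lt_trans (nm_lip _ _ _) _; exact: nm_lt.
Qed.

Lemma sK : cancel psiU phiU.
Proof. move=> y; apply: phi_uclsE; [exact: bounded_const | move=> k; exact: Cl_refl]. Qed.

Lemma pK : cancel phiU psiU.
Proof.
move=> X; apply: sig_eq; rewrite /psiU /= unormalE; last exact: bounded_const.
rewrite (proj2 (urepP X)); apply: funext => y; apply: propext; split.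
  move=> [hb hr]; split=> //; apply/urel_Cl => k.
  exact: (Cl_trans HU (phiP X k) ((urel_Cl _ _).1 hr k)).
move=> [hb hr]; split=> //; apply/urel_Cl => k.
exact: (Cl_trans HU (Cl_sym HU (phiP X k)) ((urel_Cl _ _).1 hr k)).
Qed.

End Iso.

Local Close Scope ring_scope.
Local Close Scope classical_set_scope.

Theorem mainTheorem14 (R : realType) (I : Type) (U : set (set I)) :
  ultrafilter U ->
  countably_incomplete U ->
  aleph_plus_good U (CN R) ->
  falg_iso (ultrapower U (CN R)) (CN R) /\
  approx_prop (ultrapower U (CN R)) /\
  contractible (ultrapower U (CN R)).
Proof.
move=> HU _ _.
have hK := @pK R I U HU; have hs := @sK R I U HU.
split; first exact: (@tr_iso R (ultrapower U (CN R)) (CN R) (phiU (U:=U)) (psiU U) hK hs (@pD R I U HU) (@pM R I U HU) (@pZ R I U HU) (@pS R I U HU)).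
split; first exact: (@tr_approx R (ultrapower U (CN R)) (CN R) (phiU (U:=U)) (psiU U) hK hs (@p0 R I U HU) (@pD R I U HU) (@pN R I U HU) (@pZ R I U HU) (@pS R I U HU) (@CN_approx R)).
exact: (@tr_contr R (ultrapower U (CN R)) (CN R) (phiU (U:=U)) (psiU U) hK hs (@p0 R I U HU) (@pD R I U HU) (@pN R I U HU) (@pM R I U HU) (@pZ R I U HU) (@pS R I U HU) (@CN_contr R)).
Qed.
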